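(* Let $G=(A\cup B,E)$ be a bipartite graph with $A=\{a_1,\dots,a_r\}$ and $B=\{b_1,\dots,b_s\}$. For each edge $(a_i,b_j)\in E$ let $L_{ij}$ be the L-frame with corner $(-i,-j)$ whose vertical segment joins $(-i,-j)$ to $(-i,0)$ and whose horizontal segment joins $(-i,-j)$ to $(0,-j)$. Let $G'$ be the graph on these L-frames in the edge intersection model. Then for every $k$, $G$ has an edge dominating set of size $k$ if and only if $G'$ has a dominating set of size $k$.
   Context: An L-frame is the union of a horizontal and a vertical segment sharing an endpoint (the corner). Edge intersection model: L-frames drawn on the integer grid are adjacent iff they share at least one grid edge. An edge dominating set of a graph is a set $S$ of edges such that every edge not in $S$ shares an endpoint with some edge of $S$. A dominating set is a vertex set such that every vertex outside it has a neighbour in it. *)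

(* Defs.v *)
From HB Require Import structures.
From mathcomp Require Import all_boot all_order all_algebra.
Set Implicit Arguments. Unset Strict Implicit. Unset Printing Implicit Defensive.
Import Order.TTheory GRing.Theory Num.Theory.
Local Open Scope ring_scope.

(* Unit edges of the integer grid:
   HE x y = the edge from (x,y) to (x+1,y);  VE x y = the edge from (x,y) to (x,y+1). *)
Inductive grid_edge : Type :=
| HE (x y : int)
| VE (x y : int).

Definition vseg (x y1 y2 : int) (g : grid_edge) : Prop :=
  exists y, g = VE x y /\ ((y1 <= y < y2) \/ (y2 <= y < y1)).

Definition hseg (y x1 x2 : int) (g : grid_edge) : Prop :=
  exists x, g = HE x y /\ ((x1 <= x < x2) \/ (x2 <= x < x1)).

Definition Lframe (cx cy vy hx : int) (g : grid_edge) : Prop :=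
  vseg cx cy vy g \/ hseg cy cx hx g.

Definition share_grid_edge (L1 L2 : grid_edge -> Prop) : Prop :=
  exists g, L1 g /\ L2 g.

(* Bipartite graph G with A = {a_1..a_r} (a_i ~ ordinal i-1 : 'I_r),
   B = {b_1..b_s} (b_j ~ ordinal j-1 : 'I_s), edge set E. *)

Definition Lij (r s : nat) (e : 'I_r * 'I_s) : grid_edge -> Prop :=
  let i : int := (e.1 : nat).+1%:Z in
  let j : int := (e.2 : nat).+1%:Z in
  Lframe (- i) (- j) 0 0.

Definition share_endpoint (r s : nat) (e f : 'I_r * 'I_s) : Prop :=
  e.1 = f.1 \/ e.2 = f.2.

Definition edge_dominating (r s : nat) (E S : {set 'I_r * 'I_s}) : Prop :=
  S \subset E /\
  forall e, e \in E -> e \notin S -> exists2 f, f \in S & share_endpoint e f.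

Definition Gprime_adj (r s : nat) (e f : 'I_r * 'I_s) : Prop :=
  e <> f /\ share_grid_edge (Lij e) (Lij f).

Definition dominating_Gprime (r s : nat) (E D : {set 'I_r * 'I_s}) : Prop :=
  D \subset E /\
  forall v, v \in E -> v \notin D -> exists2 u, u \in D & Gprime_adj u v.

(* Main.v *)
Require Import Defs.
From mathcomp Require Import all_boot all_order all_algebra.
From mathcomp Require Import zify.
Import Order.TTheory GRing.Theory Num.Theory.
Local Open Scope ring_scope.

Lemma share_Lij (r s : nat) (e f : 'I_r * 'I_s) :
  share_grid_edge (Lij e) (Lij f) <-> share_endpoint e f.
Proof.
case: e => [i j]; case: f => [i' j']; rewrite /share_grid_edge /Lij /share_endpoint /=.
split.
- move=> [g [[[y [-> _]]|[x [-> _]]] [[y' [E _]]|[x' [E _]]]]]; try discriminate E;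
    case: E => E1 E2.
  + left; apply: val_inj => /=; move: E1; lia.
  + right; apply: val_inj => /=; move: E2; lia.
- move=> [<-|<-].
  + exists (VE (- (i : nat).+1%:Z) (-1)); split; left; exists (-1); split => //; left; lia.
  + exists (HE (-1) (- (j : nat).+1%:Z)); split; right; exists (-1); split => //; left; lia.
Qed.

Lemma edge_dom_iff (r s : nat) (E D : {set 'I_r * 'I_s}) :
  edge_dominating E D <-> dominating_Gprime E D.
Proof.
rewrite /edge_dominating /dominating_Gprime /Gprime_adj; split=> -[sub H]; split => // v vE vD.
- have [u uD hu] := H v vE vD; exists u => //; split.
  + by move=> euv; move: vD; rewrite -euv uD.
  + apply/share_Lij; case: hu => h; [left|right]; by rewrite h.
- have [u uD [_ hu]] := H v vE vD; exists u => //.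
  by case/share_Lij: hu => h; [left|right]; rewrite h.
Qed.

Theorem mainTheorem14 (r s : nat) (E : {set 'I_r * 'I_s}) (k : nat) :
  (exists S : {set 'I_r * 'I_s}, edge_dominating E S /\ #|S| = k) <->
  (exists D : {set 'I_r * 'I_s}, dominating_Gprime E D /\ #|D| = k).
Proof.
split=> -[S [HS <-]]; exists S; split => //; exact/edge_dom_iff.
Qed.
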